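(* Let $P$ be the transition matrix of a reversible and ergodic Markov chain on $V$ with stationary distribution $\pi$ and mixing rate $t^*$. For the billiard router model for $P$, with any initial configuration, $$\left|\chi^{(T)}_w-\mu^{(T)}_w\right|\le\frac{3\pi_w}{\pi_{\min}}\,t^*\,\Delta(\Delta-1)$$ for all $w\in V$ and $T\ge0$.
   Context: Let $V=\{1,\dots,N\}$ and let $P\in\mathbb{R}_{\ge 0}^{N\times N}$ be an ergodic (irreducible, aperiodic) stochastic matrix with stationary distribution $\pi$; $\pi_{\min}=\min_v\pi_v$; reversible means $\pi_uP_{u,v}=\pi_vP_{v,u}$ for all $u,v$. For $v\in V$ let $\mathcal N(v)=\{u: P_{v,u}>0\}$, $\delta(v)=|\mathcal N(v)|$, $\Delta=\max_v\delta(v)$. Total variation distance $d_{TV}(\xi,\zeta)=\frac12\|\xi-\zeta\|_1$; mixing time $\tau(\varepsilon)=\max_{v}\min\{t\ge0: d_{TV}(P^t_{v,\cdot},\pi)\le\varepsilon\}$; mixing rate $t^*=\tau(1/4)$. A functional-router model consists of functions $\sigma_v:\mathbb{Z}_{\ge0}\to\mathcal N(v)$; write $I_{v,u}[z,z')=|\{j\in\{z,\dots,z'-1\}:\sigma_v(j)=u\}|$ (zero if $z'\le z$). Given $\chi^{(0)}\in\mathbb{Z}_{\ge0}^N$, set $Z^{(t)}_{v,u}=I_{v,u}\big[\sum_{s=0}^{t-1}\chi^{(s)}_v,\sum_{s=0}^{t}\chi^{(s)}_v\big)$, $\chi^{(t+1)}_u=\sum_vZ^{(t)}_{v,u}$,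 $\mu^{(0)}=\chi^{(0)}$, $\mu^{(t)}=\mu^{(0)}P^t$. The billiard router is defined recursively: $\sigma_v(i)$ is an element $u\in\mathcal N(v)$ minimizing $(I_{v,u}[0,i)+1)/P_{v,u}$ (ties broken arbitrarily). It is known (billiard sequences) that for this router $|I_{v,u}[z,z')-(z'-z)P_{v,u}|\le 1+(\delta(v)-2)P_{v,u}$ for all $v,u$ and $z'>z\ge0$. *)

(* Defs.v *)
From HB Require Import structures.
From mathcomp Require Import all_boot all_order all_algebra.
Set Implicit Arguments. Unset Strict Implicit. Unset Printing Implicit Defensive.
Import Order.TTheory GRing.Theory Num.Theory.
Local Open Scope ring_scope.

Section Defs.
Variable R : realFieldType.
Variable N : nat.
Implicit Types (P : 'M[R]_N) (pi : 'rV[R]_N).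

Definition mxpow P (t : nat) : 'M[R]_N := iter t (fun M => M *m P) 1%:M.

Definition stochastic P : Prop :=
  (forall u v, 0 <= P u v) /\ (forall u, \sum_v P u v = 1).

Definition irreducible P : Prop :=
  forall u v, exists t, 0 < mxpow P t u v.

(* the gcd of {t >= 1 : P^t_{v,v} > 0} is 1: no d > 1 divides all its elements *)
Definition aperiodic P : Prop :=
  forall v (d : nat), (1 < d)%N ->
    exists t, [/\ (0 < t)%N, 0 < mxpow P t v v & ~~ (d %| t)%N].

Definition ergodic P : Prop := irreducible P /\ aperiodic P.

Definition stationary P pi : Prop :=
  (forall v, 0 <= pi 0 v) /\ \sum_v pi 0 v = 1 /\ pi *m P = pi.

Definition reversible P pi : Prop :=
  forall u v, pi 0 u * P u v = pi 0 v * P v u.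

Definition dTV_row P pi (t : nat) (v : 'I_N) : R :=
  2^-1 * \sum_u `|mxpow P t v u - pi 0 u|.

(* tau(eps) = max_v min { t : dTV(P^t_v, pi) <= eps } = tau *)
Definition is_mixing_time P pi (eps : R) (tau : nat) : Prop :=
  (forall v, exists t, (t <= tau)%N /\ dTV_row P pi t v <= eps) /\
  (exists v, forall t, (t < tau)%N -> eps < dTV_row P pi t v).

Definition is_mixing_rate P pi (tstar : nat) : Prop :=
  is_mixing_time P pi (4%:R)^-1 tstar.

Definition outdeg P (v : 'I_N) : nat := #|[set u | 0 < P v u]|.
Definition maxdeg P : nat := \max_(v < N) outdeg P v.

Definition Icount (sigma : 'I_N -> nat -> 'I_N) (v u : 'I_N) (z z' : nat) : nat :=
  count (fun j => sigma v j == u) (iota z (z' - z)).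

Definition billiard_router P (sigma : 'I_N -> nat -> 'I_N) : Prop :=
  forall v i,
    0 < P v (sigma v i) /\
    forall u, 0 < P v u ->
      ((Icount sigma v (sigma v i) 0 i).+1)%:R / P v (sigma v i)
        <= ((Icount sigma v u 0 i).+1)%:R / P v u.

(* state at time t: (chi^(t), sum_{s<t} chi^(s)) *)
Fixpoint router_state (sigma : 'I_N -> nat -> 'I_N) (chi0 : 'I_N -> nat) (t : nat)
  : ('I_N -> nat) * ('I_N -> nat) :=
  match t with
  | 0 => (chi0, fun _ => 0%N)
  | t'.+1 =>
      let (chi, cum) := router_state sigma chi0 t' in
      ((fun u => \sum_(v < N) Icount sigma v u (cum v) (cum v + chi v)),
       (fun v => cum v + chi v))
  end.

Definition chi (sigma : 'I_N -> nat -> 'I_N) (chi0 : 'I_N -> nat) (t : nat) : 'I_N -> nat :=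
  (router_state sigma chi0 t).1.

Definition mu P (chi0 : 'I_N -> nat) (t : nat) : 'rV[R]_N :=
  (\row_v (chi0 v)%:R) *m mxpow P t.

End Defs.

Definition pi_min (R : realFieldType) (n : nat) (pi : 'rV[R]_n.+1) : R :=
  \big[Num.min/pi 0 ord0]_(v < n.+1) pi 0 v.

(* Main.v *)
Require Import Defs.
From HB Require Import structures.
From mathcomp Require Import all_boot all_order all_algebra.
From mathcomp Require Import zify ring lra.
Set Implicit Arguments. Unset Strict Implicit. Unset Printing Implicit Defensive.
Import Order.TTheory GRing.Theory Num.Theory.
Local Open Scope ring_scope.

Section Mx.
Variables (R : realFieldType) (n : nat) (P : 'M[R]_n.+1) (pi : 'rV[R]_n.+1).
Hypothesis Pnn : forall u v, 0 <= P u v.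
Hypothesis Psum : forall u, \sum_v P u v = 1.
Hypothesis piP : pi *m P = pi.

Lemma mxpowE t : mxpow P t = P ^+ t.
Proof. by elim: t => [|t IH] //=; rewrite IH exprSr. Qed.

Lemma Qnn s u v : 0 <= (P ^+ s) u v.
Proof.
elim: s u v => [|s IH] u v; first by rewrite expr0 mxE; case: eqP.
by rewrite exprSr mxE; apply: sumr_ge0 => y _; apply: mulr_ge0.
Qed.

Lemma Qsum s u : \sum_v (P ^+ s) u v = 1.
Proof.
elim: s u => [|s IH] u.
  rewrite expr0 (bigD1 u) //= big1 ?mxE ?eqxx ?addr0 // => v /negbTE.
  by rewrite mxE eq_sym => ->.
rewrite exprSr.
under eq_bigr do rewrite mxE.
rewrite exchange_big /=.
under eq_bigr do rewrite -mulr_sumr Psum mulr1.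
exact: IH.
Qed.

Lemma piQ s : pi *m P ^+ s = pi.
Proof. by elim: s => [|s IH]; rewrite ?expr0 ?mulmx1 // exprSr mulmxA IH piP. Qed.

Definition fx s x := \sum_u `|(P ^+ s) x u - pi 0 u|.

Hypothesis pinn : forall v, 0 <= pi 0 v.
Hypothesis pisum : \sum_v pi 0 v = 1.

Lemma fx_ge0 s x : 0 <= fx s x.
Proof. by apply: sumr_ge0 => u _. Qed.

Lemma fx_split a t x :
  fx (a + t) x <= \sum_y `|(P ^+ a) x y - pi 0 y| * fx t y.
Proof.
rewrite /fx.
have E u : (P ^+ (a + t)) x u - pi 0 u =
   \sum_y ((P ^+ a) x y - pi 0 y) * ((P ^+ t) y u - pi 0 u).
  under eq_bigr do rewrite mulrBl !mulrBr.
  rewrite !sumrB exprD mxE -!mulr_suml Qsum.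
  have := congr1 (fun M : 'rV[R]_n.+1 => M 0 u) (piQ t); rewrite mxE => ->.
  rewrite pisum; ring.
under eq_bigr do rewrite E.
apply: (le_trans (ler_sum _ (fun u _ => ler_norm_sum _ _ _))).
rewrite exchange_big /=; apply: ler_sum => y _.
rewrite mulr_sumr; apply: ler_sum => u _.
by rewrite normrM.
Qed.

Lemma fx_mono s x : fx s.+1 x <= fx s x.
Proof.
rewrite /fx.
have E u : (P ^+ s.+1) x u - pi 0 u =
   \sum_y ((P ^+ s) x y - pi 0 y) * P y u.
  under eq_bigr do rewrite mulrBl.
  rewrite sumrB exprSr mxE.
  have := congr1 (fun M : 'rV[R]_n.+1 => M 0 u) piP; rewrite mxE => ->.
  by [].
under eq_bigr do rewrite E.
apply: (le_trans (ler_sum _ (fun u _ => ler_norm_sum _ _ _))).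
rewrite exchange_big /=; apply: ler_sum => y _.
under eq_bigr do rewrite normrM (ger0_norm (Pnn _ _)).
by rewrite -mulr_sumr Psum mulr1.
Qed.

Lemma fx_le2 s x : fx s x <= 2.
Proof.
rewrite /fx.
apply: (le_trans (ler_sum _ (fun u _ => ler_normB _ _))).
rewrite big_split /=.
under eq_bigr do rewrite ger0_norm ?Qnn //.
rewrite Qsum.
have -> : \sum_i `|pi 0 i| = \sum_i pi 0 i.
  apply: eq_bigr => i _; apply: ger0_norm; exact: pinn.
by rewrite pisum.
Qed.

Lemma fx_monoW s t x : (s <= t)%N -> fx t x <= fx s x.
Proof.
move=> /subnKC <-; elim: (t - s)%N => [|k IH]; first by rewrite addn0.
by rewrite addnS; apply: le_trans (fx_mono _ _) IH.
Qed.

Lemma powS k : P ^+ k *m P = P ^+ k.+1.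
Proof. by rewrite exprSr. Qed.

Lemma telescope (c : nat -> 'rV[R]_n.+1) T :
  c T - c 0%N *m P ^+ T = \sum_(t < T) (c t.+1 - c t *m P) *m P ^+ (T - t.+1).
Proof.
elim: T => [|T IH]; first by rewrite big_ord0 expr0 mulmx1 subrr.
rewrite big_ord_recr /= subnn expr0 mulmx1.
have -> : \sum_(i < T) (c i.+1 - c i *m P) *m P ^+ (T.+1 - i.+1)
   = (\sum_(i < T) (c i.+1 - c i *m P) *m P ^+ (T - i.+1)) *m P.
  rewrite mulmx_suml; apply: eq_bigr => i _.
  rewrite -mulmxA powS subSS; congr (_ *m P ^+ _); have := ltn_ord i; lia.
rewrite -IH mulmxBl -mulmxA powS.
by rewrite addrC addrA subrK.
Qed.

End Mx.

Section SeqSum.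
Variables (R : realFieldType) (f : nat -> R) (t : nat).
Hypotheses (f0 : forall s, 0 <= f s) (f2 : forall s, f s <= 2)
  (fm : forall s, f s.+1 <= f s) (ft : f t <= 2^-1)
  (fh : forall s, f (s + t) <= f s / 2).

Lemma fmW s r : (s <= r)%N -> f r <= f s.
Proof.
move=> /subnKC <-; elim: (r - s)%N => [|k IH]; first by rewrite addn0.
by rewrite addnS; apply: le_trans (fm _) IH.
Qed.

Lemma tail_sum m : (0 < t)%N -> \sum_(s < m) f (t + s) <= t%:R.
Proof.
move=> tp; elim: m {-2}m (leqnn m) => [|M IH] m.
  by rewrite leqn0 => /eqP ->; rewrite big_ord0.
move=> hm; case: (leqP m t) => hmt.
  apply: (@le_trans _ _ (\sum_(s < m) 2^-1)).
    apply: ler_sum => s _; apply: le_trans ft; apply: fmW; exact: leq_addr.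
  rewrite sumr_const card_ord -mulr_natr.
  have : (m%:R <= t%:R :> R) by rewrite ler_nat.
  have : (0 <= m%:R :> R) by rewrite ler0n.
  lra.
have -> : m = (t + (m - t))%N by lia.
rewrite big_split_ord /=.
have H1 : \sum_(i < t) f (t + lshift (m - t) i) <= t%:R / 2.
  apply: (@le_trans _ _ (\sum_(s < t) 2^-1)).
    apply: ler_sum => s _; apply: le_trans ft; apply: fmW; exact: leq_addr.
  rewrite sumr_const card_ord -mulr_natr; lra.
have H2 : \sum_(i < m - t) f (t + rshift t i) <= t%:R / 2.
  apply: (@le_trans _ _ (\sum_(i < m - t) f (t + i) / 2)).
    apply: ler_sum => s _ /=. rewrite addnC; exact: fh.
  rewrite -mulr_suml; have := IH (m - t)%N ltac:(lia); lra.
lra.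
Qed.

Lemma total_sum T : \sum_(s < T) f s <= 3%:R * t%:R.
Proof.
case: (posnP t) => [t0|tp].
  rewrite t0 mulr0; apply: sumr_le0 => s _.
  have := fh s; rewrite t0 addn0 => h; have := f0 s; lra.
case: (leqP T t) => hT.
  apply: (@le_trans _ _ (\sum_(s < T) 2)); first by apply: ler_sum.
  rewrite sumr_const card_ord -mulr_natr.
  have : (T%:R <= t%:R :> R) by rewrite ler_nat.
  have : (0 <= T%:R :> R) by rewrite ler0n.
  lra.
have -> : T = (t + (T - t))%N by lia.
rewrite big_split_ord /=.
have H1 : \sum_(i < t) f (lshift (T - t) i) <= 2 * t%:R.
  apply: (@le_trans _ _ (\sum_(s < t) 2)); first by apply: ler_sum.
  rewrite sumr_const card_ord -mulr_natr; lra.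
have H2 := tail_sum (T - t) tp.
have : (0 <= t%:R :> R) by rewrite ler0n.
lra.
Qed.
End SeqSum.

Section Billiard.
Variables (R : realFieldType) (n : nat) (P : 'M[R]_n.+1)
  (sigma : 'I_n.+1 -> nat -> 'I_n.+1) (v : 'I_n.+1).
Hypothesis Pnn : forall u v, 0 <= P u v.
Hypothesis Psum : forall u, \sum_v P u v = 1.
Hypothesis router : billiard_router P sigma.

Definition xc u i := Icount sigma v u 0 i.

Lemma xcS u i : xc u i.+1 = (xc u i + (sigma v i == u))%N.
Proof.
by rewrite /xc /Icount !subn0 -[i.+1]addn1 iotaD count_cat /= addn0 add0n.
Qed.

Lemma xc0 u : xc u 0 = 0%N.
Proof. by []. Qed.

Lemma Icount_xc u z z' : (z <= z')%N -> Icount sigma v u z z' = (xc u z' - xc u z)%N.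
Proof.
move=> hz; rewrite /xc /Icount !subn0.
have -> : z' = (z + (z' - z))%N by lia.
by rewrite iotaD count_cat add0n addKn addnC addnK.
Qed.

Lemma xc_mono u i j : (i <= j)%N -> (xc u i <= xc u j)%N.
Proof.
move=> /subnKC <-; elim: (j - i)%N => [|k IH]; first by rewrite addn0.
by rewrite addnS xcS; apply: leq_trans IH (leq_addr _ _).
Qed.

Lemma sum_xc i : (\sum_u xc u i)%N = i.
Proof.
elim: i => [|i IH]; first by rewrite big1.
under eq_bigr do rewrite xcS.
rewrite big_split /= IH (bigD1 (sigma v i)) //= eqxx big1 ?addn0 ?addn1 //.
by move=> u /negbTE; rewrite eq_sym => ->.
Qed.

Lemma xc_supp u i : ~~ (0 < P v u) -> xc u i = 0%N.
Proof.
move=> hp; elim: i => [|i IH] //; rewrite xcS IH.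
case: eqP => // e; case: (router v i) => h _.
by move: hp; rewrite -e h.
Qed.

Lemma P_supp u : ~~ (0 < P v u) -> P v u = 0.
Proof. by move=> h; apply/eqP; rewrite eq_le Pnn andbT leNgt. Qed.

Lemma lower_inv i : forall (d : R) (m : 'I_n.+1 -> nat),
  (forall u, (m u)%:R <= d * P v u) ->
  (\sum_u (m u - xc u i))%N = 0%N \/
  ((\sum_u (m u - xc u i))%N)%:R + i%:R <= d.
Proof.
elim: i => [|i IH] d m hm.
  right; rewrite addr0 natr_sum.
  apply: (@le_trans _ _ (\sum_u d * P v u)).
    by apply: ler_sum => u _; rewrite xc0 subn0.
  by rewrite -mulr_sumr Psum mulr1.
case: (boolP [exists u, (xc u i < m u)%N]) => [/existsP [u hu]|hno]; last first.
  left; apply: big1 => u _; apply/eqP.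
  rewrite subn_eq0; apply: leq_trans (xc_mono _ (leqnSn i)).
  rewrite leqNgt; apply/negP => h; move/negP: hno; apply; apply/existsP; by exists u.
set s := sigma v i.
have [ps hmin] := router v i.
have hpu : 0 < P v u.
  rewrite lt_def Pnn andbT; apply/negP => /eqP e.
  have := hm u; rewrite e mulr0; rewrite leNgt => /negP; apply.
  by rewrite ltr0n; apply: leq_ltn_trans hu.
have hs : (xc s i).+1%:R <= d * P v s.
  have h1 := hmin u hpu.
  have h2 : (xc u i).+1%:R <= d * P v u by apply: le_trans (hm u); rewrite ler_nat.
  rewrite -/(xc s i) -/(xc u i) in h1.
  have h3 : (xc u i).+1%:R / P v u <= d by rewrite ler_pdivrMr.
  have h4 := le_trans h1 h3.
  by rewrite ler_pdivrMr // in h4.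
pose m' y := if y == s then maxn (m y) (xc s i).+1 else m y.
have hm' : forall y, (m' y)%:R <= d * P v y.
  move=> y; rewrite /m'; case: eqP => [->|_]; last exact: hm.
  have [->|->] : maxn (m s) (xc s i).+1 = m s \/ maxn (m s) (xc s i).+1 = (xc s i).+1 by lia.
    exact: hm.
  exact: hs.
have S'i : (\sum_y (m' y - xc y i))%N = ((\sum_y (m' y - xc y i.+1)).+1)%N.
  rewrite (bigD1 s) //= [in RHS](bigD1 s) //= xcS /m' eqxx.
  rewrite -addSn; congr addn; last first.
    apply: eq_bigr => y; rewrite eq_sym => /negbTE hy; rewrite xcS.
    by rewrite -/s hy addn0.
  lia.
have le' : (\sum_y (m y - xc y i.+1) <= \sum_y (m' y - xc y i.+1))%N.
  apply: leq_sum => y _; apply: leq_sub2r; rewrite /m'; case: eqP => // ->.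
  exact: leq_maxl.
case: (IH d m' hm') => [|h]; first by rewrite S'i.
right; rewrite S'i -natr1 in h.
rewrite -natr1.
apply: le_trans h.
have : ((\sum_u (m u - xc u i.+1))%:R <= (\sum_y (m' y - xc y i.+1))%:R :> R) by rewrite ler_nat.
lra.
Qed.

Lemma lower_bound u i : 0 < P v u -> (i.+1)%:R * P v u <= (xc u i).+1%:R.
Proof.
move=> hp.
pose d := (xc u i).+1%:R / P v u.
pose m y := if y == u then (xc u i).+1 else 0%N.
have hm : forall y, (m y)%:R <= d * P v y.
  move=> y; rewrite /m; case: eqP => [->|_].
    by rewrite /d mulrVK // unitfE gt_eqF.
  apply: mulr_ge0 => //; apply: divr_ge0 => //; exact: ltW.
have S1 : (\sum_y (m y - xc y i))%N = 1%N.
  rewrite (bigD1 u) //= big1 /m ?eqxx; first lia.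
  by move=> y /negbTE ->.
case: (@lower_inv i d m hm); rewrite S1 // => h.
rewrite -ler_pdivlMr // -/d; apply: le_trans h; rewrite -natrD add1n //.
Qed.

Definition deg := outdeg P v.

Lemma supp_sum_x i : (\sum_(y | 0 < P v y) (xc y i)%:R) = i%:R :> R.
Proof.
rewrite big_mkcond /=.
transitivity (((\sum_u xc u i)%N)%:R : R); last by rewrite sum_xc.
rewrite natr_sum; apply: eq_bigr => y _.
by case: (boolP (0 < P v y)) => // h; rewrite xc_supp.
Qed.

Lemma supp_sum_p : (\sum_(y | 0 < P v y) P v y) = 1.
Proof.
rewrite big_mkcond /= -(Psum v); apply: eq_bigr => y _.
by case: (boolP (0 < P v y)) => // h; rewrite P_supp.
Qed.

Lemma supp_card : (\sum_(y | 0 < P v y) 1) = deg%:R :> R.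
Proof. by rewrite sumr_const /deg /outdeg cardsE. Qed.

Lemma deg_ge1 : (1 <= deg)%N.
Proof.
rewrite /deg /outdeg card_gt0; apply/set0Pn; exists (sigma v 0).
by rewrite inE; case: (router v 0).
Qed.

Lemma upper_bound u i : (xc u i)%:R <= (i%:R + deg%:R - 1) * P v u.
Proof.
elim: i => [|i IH].
  rewrite xc0 add0r; apply: mulr_ge0 => //.
  by rewrite subr_ge0 ler1n deg_ge1.
rewrite xcS natrD; case: eqP => [e|_]; last first.
  rewrite addr0; apply: le_trans IH _; apply: ler_wpM2r => //.
  rewrite -natr1; lra.
rewrite -e; have [ps hmin] := router v i; rewrite -/(xc _ i) in hmin.
set s := sigma v i in e hmin ps *.
have key : (xc s i).+1%:R / P v s <= i%:R + deg%:R.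
  rewrite -(supp_sum_x i) -supp_card -big_split /=.
  apply: (@le_trans _ _ (\sum_(y | 0 < P v y) ((xc s i).+1%:R / P v s) * P v y)).
    by rewrite -mulr_sumr supp_sum_p mulr1.
  apply: ler_sum => y hy; have := hmin y hy; rewrite -/(xc y i) => h.
  by rewrite natr1 -ler_pdivlMr.
move: key; rewrite ler_pdivrMr // -natr1 => key.
by rewrite -natr1 (_ : i%:R + 1 + deg%:R - 1 = i%:R + deg%:R :> R) //; ring.
Qed.


Lemma P_le1 u : P v u <= 1.
Proof.
rewrite -(Psum v) (bigD1 u) //= lerDl; apply: sumr_ge0 => y _; exact: Pnn.
Qed.

Lemma deg1_P1 u : 0 < P v u -> deg = 1%N -> P v u = 1.
Proof.
move=> hp hd; rewrite -supp_sum_p (bigD1 u) //= big_pred0 ?addr0 //.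
move: hd; rewrite /deg /outdeg (cardD1 u) inE hp add1n => -[] /card0_eq h y.
by have := h y; rewrite !inE andbC.
Qed.

Lemma disc_bound u z z' : (z <= z')%N -> 0 < P v u ->
  `|(Icount sigma v u z z')%:R - (z' - z)%:R * P v u|
     <= (deg%:R - 1) * P v u + 1 - P v u.
Proof.
move=> hz hp; rewrite Icount_xc // !natrB ?xc_mono //.
have l1 := lower_bound z hp; have l2 := lower_bound z' hp.
have u1 := upper_bound u z; have u2 := upper_bound u z'.
rewrite -!natr1 in l1 l2.
rewrite ler_norml; apply/andP; split.
  move: l1 l2 u1 u2; set p := P v u; set a := (xc u z)%:R; set b := (xc u z')%:R.
  move=> l1 l2 u1 u2; nra.
move: l1 l2 u1 u2; set p := P v u; set a := (xc u z)%:R; set b := (xc u z')%:R.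
move=> l1 l2 u1 u2; nra.
Qed.

Lemma disc_le u z z' : (z <= z')%N ->
  `|(Icount sigma v u z z')%:R - (z' - z)%:R * P v u|
     <= (if 0 < P v u then ((maxdeg P).-1)%:R else 0).
Proof.
move=> hz; case: (boolP (0 < P v u)) => hp; last first.
  rewrite P_supp // mulr0 subr0 Icount_xc // !xc_supp // subnn.
  by rewrite normr0.
apply: (le_trans (disc_bound hz hp)).
have hd : (deg <= maxdeg P)%N by rewrite /deg /maxdeg; apply: (@leq_bigmax _ (fun v => outdeg P v) v).
have h1 := deg_ge1.
rewrite -subn1 natrB; last by apply: leq_trans hd.
have hp1 := P_le1 u.
case: (ltngtP deg 1) => hd1.
- by move: h1; rewrite leqNgt hd1.
- have : (2%:R <= deg%:R :> R) by rewrite ler_nat.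
  have : (deg%:R <= (maxdeg P)%:R :> R) by rewrite ler_nat.
  move=> *; nra.
- rewrite (deg1_P1 hp hd1) hd1.
  have : (1%:R <= (maxdeg P)%:R :> R) by rewrite ler_nat -hd1.
  move=> *; lra.
Qed.

End Billiard.

Section Main.
Variables (R : realFieldType) (n : nat) (P : 'M[R]_n.+1) (pi : 'rV[R]_n.+1).
Hypothesis Pnn : forall u v, 0 <= P u v.
Hypothesis Psum : forall u, \sum_v P u v = 1.
Hypothesis piP : pi *m P = pi.
Hypothesis pinn : forall v, 0 <= pi 0 v.
Hypothesis pisum : \sum_v pi 0 v = 1.
Hypothesis rev : reversible P pi.
Hypothesis irr : irreducible P.

Lemma pi_pos v : 0 < pi 0 v.
Proof.
have [u0 hu0] : exists u0, 0 < pi 0 u0.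
  case: (boolP [exists u, 0 < pi 0 u]) => [/existsP //|h].
  have : \sum_v pi 0 v = 0.
    apply: big1 => u _; apply/eqP; rewrite eq_le pinn andbT leNgt.
    apply/negP => hu; move/negP: h; apply; apply/existsP; by exists u.
  by rewrite pisum => /eqP; rewrite oner_eq0.
have [t ht] := irr u0 v; rewrite mxpowE in ht.
have := congr1 (fun M : 'rV[R]_n.+1 => M 0 v) (piQ piP t); rewrite mxE => <-.
rewrite (bigD1 u0) //=; apply: (lt_le_trans (mulr_gt0 hu0 ht)).
rewrite lerDl; apply: sumr_ge0 => y _; apply: mulr_ge0 => //; exact: Qnn.
Qed.

Lemma pimin_pos : 0 < pi_min pi.
Proof. by rewrite /pi_min; elim/big_ind: _ => [|x y hx hy|i _]; [exact: pi_pos | rewrite lt_min hx hy | exact: pi_pos]. Qed.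

Lemma pimin_le u : pi_min pi <= pi 0 u.
Proof. by rewrite /pi_min (bigD1 u) //= ge_min lexx. Qed.

Lemma rev_pow s u w : pi 0 u * (P ^+ s) u w = pi 0 w * (P ^+ s) w u.
Proof.
elim: s u w => [|s IH] u w.
  rewrite expr0 !mxE; case: (eqVneq u w) => [->//|h].
  by rewrite !mulr0.
rewrite {1}exprSr exprS !mxE !mulr_sumr; apply: eq_bigr => y _.
by rewrite mulrA IH mulrAC rev -mulrA.
Qed.

Lemma indeg u : #|[set v | 0 < P v u]| = outdeg P u.
Proof.
rewrite /outdeg; apply: eq_card => v; rewrite !inE.
by rewrite -(pmulr_rgt0 (P v u) (pi_pos v)) rev (pmulr_rgt0 _ (pi_pos u)).
Qed.

Lemma indeg_le u : (#|[set v | (0 < P v u)%R]| <= maxdeg P)%N.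
Proof. by rewrite indeg /maxdeg; apply: (@leq_bigmax _ (fun v => outdeg P v) u). Qed.

Lemma entry_rev s u w : `|(P ^+ s) u w - pi 0 w| <= pi 0 w / pi_min pi * `|(P ^+ s) w u - pi 0 u|.
Proof.
have hu := pi_pos u; have hw := pi_pos w; have hm := pimin_pos.
have e : (P ^+ s) u w - pi 0 w = pi 0 w / pi 0 u * ((P ^+ s) w u - pi 0 u).
  apply: (mulfI (x := pi 0 u)); first by rewrite gt_eqF.
  rewrite mulrBr rev_pow mulrA mulrCA mulfV ?gt_eqF // mulr1 mulrBr; ring.
rewrite e normrM (ger0_norm (x := pi 0 w / pi 0 u)); last by apply: divr_ge0.
apply: ler_wpM2r; first exact: normr_ge0.
rewrite ler_pdivrMr // mulrAC ler_pdivlMr // ler_pM2l //; exact: pimin_le.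
Qed.

Variables (sigma : 'I_n.+1 -> nat -> 'I_n.+1) (chi0 : 'I_n.+1 -> nat).
Hypothesis router : billiard_router P sigma.

Definition cum t := (router_state sigma chi0 t).2.

Lemma chiS t u : chi sigma chi0 t.+1 u =
  (\sum_v Icount sigma v u (cum t v) (cum t v + chi sigma chi0 t v))%N.
Proof. by rewrite /chi /cum /=; case: (router_state sigma chi0 t). Qed.

Lemma sum_count v (s : seq nat) :
  (\sum_u count (fun j => sigma v j == u) s)%N = size s.
Proof.
elim: s => [|j s IH] /=; first by rewrite big1.
rewrite big_split /= IH (bigD1 (sigma v j)) //= eqxx big1 ?addn0 ?add1n //.
by move=> u /negbTE; rewrite eq_sym => ->.
Qed.

Lemma sum_Icount v z z' : (\sum_u Icount sigma v u z z')%N = (z' - z)%N.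
Proof. by rewrite /Icount sum_count size_iota. Qed.

Lemma step_bound t s w :
  `|\sum_u ((chi sigma chi0 t.+1 u)%:R - \sum_v (chi sigma chi0 t v)%:R * P v u) * (P ^+ s) u w|
   <= ((maxdeg P).-1)%:R * (maxdeg P)%:R * (pi 0 w / pi_min pi * fx P pi s w).
Proof.
set ch := chi sigma chi0 t; set cm := cum t.
pose D v u := (Icount sigma v u (cm v) (cm v + ch v))%:R - (ch v)%:R * P v u.
have E u : (chi sigma chi0 t.+1 u)%:R - \sum_v (ch v)%:R * P v u = \sum_v D v u.
  by rewrite chiS natr_sum -sumrB.
have SD v : \sum_u D v u = 0.
  rewrite /D sumrB -natr_sum sum_Icount addKn -mulr_sumr Psum mulr1 subrr //.
have -> : \sum_u ((chi sigma chi0 t.+1 u)%:R - \sum_v (ch v)%:R * P v u) * (P ^+ s) u w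
    = \sum_v \sum_u D v u * ((P ^+ s) u w - pi 0 w).
  under eq_bigr do rewrite E mulr_suml.
  rewrite exchange_big /=; apply: eq_bigr => v _.
  under [RHS]eq_bigr do rewrite mulrBr.
  by rewrite sumrB -mulr_suml SD mul0r subr0.
set D1 := ((maxdeg P).-1)%:R : R.
have D1ge : 0 <= D1 by rewrite ler0n.
apply: le_trans (ler_norm_sum _ _ _) _.
apply: (@le_trans _ _ (\sum_v \sum_u (if 0 < P v u then D1 else 0) * `|(P ^+ s) u w - pi 0 w|)).
  apply: ler_sum => v _; apply: le_trans (ler_norm_sum _ _ _) _; apply: ler_sum => u _.
  rewrite normrM; apply: ler_wpM2r => //; rewrite /D.
  have := disc_le v Pnn Psum router u (leq_addr (ch v) (cm v)).
  by rewrite addKn.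
rewrite exchange_big /=.
apply: (@le_trans _ _ (\sum_u D1 * (maxdeg P)%:R * `|(P ^+ s) u w - pi 0 w|)).
  apply: ler_sum => u _; rewrite -mulr_suml; apply: ler_wpM2r => //.
  rewrite -big_mkcond /= sumr_const -[_ *+ #|_|]mulr_natr.
  apply: ler_wpM2l => //; rewrite ler_nat; apply: leq_trans (indeg_le u).
  by rewrite (@eq_card _ _ [set v | 0 < P v u]) // => v; rewrite inE.
rewrite -mulr_sumr; apply: ler_wpM2l; first by apply: mulr_ge0; rewrite ?ler0n.
rewrite /fx mulr_sumr; apply: ler_sum => u _; exact: entry_rev.
Qed.


Variable tstar : nat.
Hypothesis mix : is_mixing_rate P pi tstar.

Lemma fx_tstar x : fx P pi tstar x <= 2^-1.
Proof.
have [t [ht hd]] := (mix.1 x).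
apply: le_trans (fx_monoW Pnn Psum piP x ht) _.
move: hd; rewrite /dTV_row mxpowE -/(fx P pi t x).
have -> : (4%:R : R) = 2 * 2 by rewrite -natrM.
rewrite invfM => h.
have h2 : (0 < (2 : R)^-1) by rewrite invr_gt0.
rewrite -(ler_pM2l h2); exact: h.
Qed.

Lemma main_bound (w : 'I_n.+1) (T : nat) :
    `|(chi sigma chi0 T w)%:R - mu P chi0 T 0 w|
      <= 3%:R * pi 0 w / pi_min pi * tstar%:R
         * ((maxdeg P) * (maxdeg P).-1)%:R.
Proof.
pose c t := \row_v ((chi sigma chi0 t v)%:R : R).
have e : (chi sigma chi0 T w)%:R - mu P chi0 T 0 w = (c T - c 0%N *m P ^+ T) 0 w.
  by rewrite /mu mxpowE !mxE.
rewrite e telescope summxE.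
apply: le_trans (ler_norm_sum _ _ _) _.
apply: (@le_trans _ _ (\sum_(t < T) ((maxdeg P).-1)%:R * (maxdeg P)%:R *
     (pi 0 w / pi_min pi * fx P pi (T - t.+1) w))).
  apply: ler_sum => t _; rewrite mxE.
  have := step_bound t (T - t.+1) w.
  congr (`|_| <= _); apply: eq_bigr => u _; rewrite !mxE.
  by congr ((_ - _) * _); apply: eq_bigr => v _; rewrite !mxE.
rewrite -!mulr_sumr.
have -> : \sum_(t < T) fx P pi (T - t.+1) w = \sum_(s < T) fx P pi s w.
  transitivity (\sum_(0 <= s < T) fx P pi s w); last by rewrite big_mkord.
  by rewrite big_rev_mkord subn0.
have hs : \sum_(s < T) fx P pi s w <= 3 * tstar%:R.
  apply: (total_sum (f := fun s => fx P pi s w)).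
  - by move=> s; apply: fx_ge0.
  - by move=> s; apply: fx_le2.
  - by move=> s; apply: fx_mono.
  - exact: fx_tstar.
  - move=> s; apply: le_trans (fx_split Psum piP pisum s tstar w) _.
    rewrite [X in _ <= X / 2]/fx mulr_suml; apply: ler_sum => y _.
    have h1 := fx_tstar y; have h2 := normr_ge0 ((P ^+ s) w y - pi 0 y).
    nra.
have hw := pinn w; have hm := pimin_pos.
have q : 0 <= pi 0 w / pi_min pi by apply: divr_ge0 => //; exact: ltW.
have d1 : 0 <= ((maxdeg P).-1)%:R * (maxdeg P)%:R :> R by apply: mulr_ge0; rewrite ler0n.
apply: le_trans (ler_wpM2l d1 (ler_wpM2l q hs)) _.
rewrite natrM le_eqVlt; apply/orP; left; apply/eqP; ring.
Qed.

End Main.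

Unset Implicit Arguments.

Theorem theorem5p3 (R : realFieldType) (n : nat)
  (P : 'M[R]_n.+1) (pi : 'rV[R]_n.+1) (tstar : nat)
  (sigma : 'I_n.+1 -> nat -> 'I_n.+1) (chi0 : 'I_n.+1 -> nat) :
  stochastic P -> ergodic P -> stationary P pi -> reversible P pi ->
  is_mixing_rate P pi tstar ->
  billiard_router P sigma ->
  forall (w : 'I_n.+1) (T : nat),
    `|(chi sigma chi0 T w)%:R - mu P chi0 T 0 w|
      <= 3%:R * pi 0 w / pi_min pi * tstar%:R
         * ((maxdeg P) * (maxdeg P).-1)%:R.
Proof.
move=> [Pnn Psum] [irr _] [pinn [pisum piP]] rev mix router w T.
exact: main_bound.
Qed.
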